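(* Let $x \in \{0,1\}^{N}$ and $q \in Q$. Then demand $q$ is served under $x$ (i.e., there exists $r \in R_q$ such that $\sum_{j \in S} x_j \ge 1$ for all $S \in \mathcal{D}_{q,r}$) if and only if $\sum_{j \in S} x_j \ge 1$ for all $S \in \mathcal{C}_q$.
   Context: Let $N$ be a finite set (of nodes) and $Q$ a finite set (of demands). For each $q \in Q$ let $R_q$ be a finite nonempty set (of routes), and for each $r \in R_q$ let $\mathcal{D}_{q,r} \subseteq 2^{N}$ be a family of subsets of $N$. Route $r$ is called traversable under $x \in \{0,1\}^N$ if $\sum_{j\in S} x_j \ge 1$ for every $S \in \mathcal{D}_{q,r}$, and demand $q$ is served under $x$ if some $r \in R_q$ is traversable under $x$. Define the aggregated family $\mathcal{C}_q = \{ \bigcup_{r \in R_q} S_r : S_r \in \mathcal{D}_{q,r} \text{ for each } r \in R_q\}$, i.e. each member of $\mathcal{C}_q$ is the union of one chosen set $S_r\in\mathcal{D}_{q,r}$ for every $r\in R_q$. *)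

(* Defs.v *)
From mathcomp Require Import all_boot.
Set Implicit Arguments. Unset Strict Implicit. Unset Printing Implicit Defensive.

(* x : N -> bool encodes x in {0,1}^N; x_j is (x j : nat). *)
Definition covers (N : finType) (x : N -> bool) (S : {set N}) : Prop :=
  (1 <= \sum_(j in S) (x j : nat))%N.

Definition traversable (N Q : finType) (R : Q -> finType)
  (D : forall q : Q, R q -> {set {set N}}) (x : N -> bool) (q : Q) (r : R q) : Prop :=
  forall S, S \in D q r -> covers x S.

Definition served (N Q : finType) (R : Q -> finType)
  (D : forall q : Q, R q -> {set {set N}}) (x : N -> bool) (q : Q) : Prop :=
  exists r : R q, @traversable N Q R D x q r.

Definition in_C (N Q : finType) (R : Q -> finType)
  (D : forall q : Q, R q -> {set {set N}}) (q : Q) (S : {set N}) : Prop :=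
  exists f : R q -> {set N},
    (forall r, f r \in D q r) /\ S = \bigcup_(r : R q) f r.

(* Main.v *)
Require Import Defs.
From mathcomp Require Import all_boot.

Lemma coversE (N : finType) (x : N -> bool) (S : {set N}) :
  covers x S <-> [exists j in S, x j].
Proof.
rewrite /covers lt0n sum_nat_eq0; split.
  move/forallPn=> [j]; rewrite negb_imply => /andP[jS xj].
  by apply/existsP; exists j; rewrite jS; case: (x j) xj.
move/existsP=> [j /andP[jS xj]]; apply/forallPn; exists j.
by rewrite negb_imply jS xj.
Qed.

Theorem lemma1 (N Q : finType) (R : Q -> finType)
  (D : forall q : Q, R q -> {set {set N}})
  (HR : forall q : Q, (0 < #|R q|)%N)
  (x : N -> bool) (q : Q) :
  served D x q <-> (forall S : {set N}, in_C D q S -> covers x S).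
Proof.
split.
  move=> [r Hr] S [f [Hf ->]].
  have /coversE/existsP [j /andP[jS xj]] := Hr _ (Hf r).
  apply/coversE/existsP; exists j; rewrite xj andbT.
  by apply/bigcupP; exists r.
move=> H.
case: (boolP [exists r : R q, [forall S in D q r, [exists j in S, x j]]]).
  move/existsP=> [r /forallP Hr]; exists r => S SD.
  by apply/coversE; move: (Hr S); rewrite SD.
move/existsPn=> Hn.
have pickS : forall r : R q, {S | S \in D q r & ~~ [exists j in S, x j]}.
  move=> r; case: (pickP [pred S | (S \in D q r) && ~~ [exists j in S, x j]]).
    by move=> S /andP[a b]; exists S.
  move=> H0; exfalso; move: (Hn r) => /forallPn [S].
  rewrite negb_imply => /andP[a b]; by move: (H0 S); rewrite /= a b.
pose f r := s2val (pickS r).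
have HC : in_C D q (\bigcup_(r : R q) f r).
  exists f; split=> // r; exact: (s2valP (pickS r)).
move: (H _ HC) => /coversE/existsP [j /andP[/bigcupP[r _ jf] xj]].
move: (s2valP' (pickS r)); rewrite -/(f r) => /existsPn/(_ j).
by rewrite jf xj.
Qed.
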